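(* Assume $B_{r,s}(\delta)$ is semisimple. If $\lambda,\mu\in\Lambda_{r,s}$ with $\lambda\ne\mu$, then there is a supersymmetric polynomial $p\in S_{r,s}[x;y]$ with $p\big(c(\lambda,1),\dots,c(\lambda,r+s)\big)\ne p\big(c(\mu,1),\dots,c(\mu,r+s)\big)$.
   Context: $B_{r,s}(\delta)$ is the walled Brauer algebra ($r,s\ge0$, $\delta\in\mathbb C$). It is known to be semisimple iff one of: $r=0$ or $s=0$; $\delta\notin\mathbb Z$; $|\delta|>r+s-2$; $\delta=0$ and $(r,s)\in\{(1,2),(1,3),(2,1),(3,1)\}$. A supersymmetric polynomial $p\in\mathbb C[x_1,\dots,x_r,y_1,\dots,y_s]$ is one symmetric in the $x$'s and separately in the $y$'s such that setting $x_r=-y_1=t$ yields a polynomial independent of $t$; $S_{r,s}[x;y]$ is the algebra of these; evaluation at $(a_1,\dots,a_{r+s})$ means $x_i=a_i$, $y_j=a_{r+j}$. $\Lambda^t_{r,s}$ is the set of pairs of partitions $(\lambda^L,\lambda^R)$ with $|\lambda^L|=r-t$, $|\lambda^R|=s-t$, and $\Lambda_{r,s}=\bigsqcup_{t=0}^{\min(r,s)}\Lambda^t_{r,s}$. For a partition $\nu$ and $1\le i\le|\nu|$, $\mathrm{cont}(\nu,i)$ is $b-a$ where $(a,b)$ (row, column) is the position of the box containing $i$ in the tableau filling the Young diagram of $\nu$ with $1,\dots,|\nu|$ in order left to right along successive rows. For $\lambda\in\Lambda^t_{r,s}$: $c(\lambda,i)=\mathrm{cont}(\lambda^L,i)$ for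 $1\le i\le r-t$; $c(\lambda,i)=0$ for $r-t<i\le r+t$; $c(\lambda,i)=\mathrm{cont}(\lambda^R,i-r-t)+\delta$ for $r+t<i\le r+s$. *)

(* Defs.v *)
From HB Require Import structures.
From mathcomp Require Import all_boot all_order all_fingroup all_algebra.
Set Implicit Arguments. Unset Strict Implicit. Unset Printing Implicit Defensive.
Import Order.TTheory GRing.Theory Num.Theory.
Local Open Scope ring_scope.

Definition monom (n : nat) := {ffun 'I_n -> nat}.
(* A polynomial is a finite formal sum of terms (exponent vector, coefficient);
   it is identified with its coefficient function [mcoef]. *)
Definition mpoly (R : Type) (n : nat) := seq (monom n * R).

Definition mcoef (R : nmodType) (n : nat) (p : mpoly R n) (m : monom n) : R :=
  \sum_(t <- p | t.1 == m) t.2.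

Definition meval (R : comNzRingType) (n : nat) (p : mpoly R n) (a : 'I_n -> R) : R :=
  \sum_(t <- p) t.2 * \prod_(i < n) a i ^+ t.1 i.

(* exponent of variable number j (0-based) in m, 0 if j >= n *)
Definition mexp (n : nat) (m : monom n) (j : nat) : nat :=
  odflt 0%N (omap m (insub j)).

(* Variables: x_1..x_r are indices 0..r-1, y_1..y_s are indices r..r+s-1. *)
Definition xy_symmetric (R : nmodType) (r s : nat) (p : mpoly R (r + s)) : Prop :=
  forall sigma : {perm 'I_(r + s)}, (forall i : 'I_(r + s), (sigma i < r)%N = (i < r)%N) ->
  forall m : monom (r + s), mcoef p [ffun i => m (sigma i)] = mcoef p m.

(* Substituting x_r = t, y_1 = -t (indices r-1 and r) gives a polynomial in t and the
   remaining variables; it is independent of t iff all its coefficients of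
   monomials with positive t-degree vanish. The coefficient of
   (remaining monomial m) * t^k is the sum below. *)
Definition drop_xr_y1 (r s : nat) (m : monom (r + s)) : monom (r + s) :=
  [ffun i : 'I_(r + s) => if ((i : nat) == r.-1) || ((i : nat) == r) then 0%N else m i].

Definition cancellation_property (R : nzRingType) (r s : nat) (p : mpoly R (r + s)) : Prop :=
  (0 < r)%N -> (0 < s)%N ->
  forall (m : monom (r + s)) (k : nat), (0 < k)%N ->
  \sum_(t <- p | (drop_xr_y1 t.1 == m) && (mexp t.1 r.-1 + mexp t.1 r == k)%N)
     t.2 * (-1) ^+ (mexp t.1 r) = 0.

Definition supersymmetric (R : nzRingType) (r s : nat) (p : mpoly R (r + s)) : Prop :=
  xy_symmetric p /\ cancellation_property p.

Definition is_partition (nu : seq nat) : bool :=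
  sorted geq nu && all (fun x => 0 < x)%N nu.

(* content of the box containing i (1-based) when the diagram of nu is filled
   row by row; rows counted from [row] *)
Fixpoint cont_aux (nu : seq nat) (i row : nat) : int :=
  match nu with
  | [::] => 0
  | x :: nu' => if (i <= x)%N then (i%:Z - row%:Z)%R else cont_aux nu' (i - x) row.+1
  end.
Definition cont (nu : seq nat) (i : nat) : int := cont_aux nu i 1.

(* bipartitions: lambda = (lambda^L, lambda^R) *)
Definition in_Lambda_t (r s t : nat) (lam : seq nat * seq nat) : bool :=
  [&& (t <= minn r s)%N, is_partition lam.1, is_partition lam.2,
      sumn lam.1 == r - t & sumn lam.2 == s - t]%N.
Definition in_Lambda (r s : nat) (lam : seq nat * seq nat) : Prop :=
  exists t, in_Lambda_t r s t lam.

(* c(lambda, i) for 1 <= i <= r+s, where t = r - |lambda^L| *)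
Definition cval (C : nzRingType) (r s : nat) (delta : C) (lam : seq nat * seq nat) (i : nat) : C :=
  let t := (r - sumn lam.1)%N in
  if (i <= r - t)%N then (cont lam.1 i)%:~R
  else if (i <= r + t)%N then 0
  else (cont lam.2 (i - r - t))%:~R + delta.

Definition cpoint (C : nzRingType) (r s : nat) (delta : C) (lam : seq nat * seq nat)
  : 'I_(r + s) -> C := fun j => cval r s delta lam (j.+1).

Definition walled_brauer_semisimple (C : numClosedFieldType) (r s : nat) (delta : C) : Prop :=
  [\/ r = 0%N \/ s = 0%N,
      ~ (exists z : int, delta = z%:~R),
      (r + s)%:R - 2 < `|delta|
    | delta = 0 /\ (r, s) \in [:: (1, 2); (1, 3); (2, 1); (3, 1)]%N].
Arguments cpoint {C} r s delta lam _.
Arguments walled_brauer_semisimple {C} r s delta.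

(* Main.v *)
Require Import Defs.
From HB Require Import structures.
From mathcomp Require Import all_boot all_order all_fingroup all_algebra.
From mathcomp Require Import zify ring.
Set Implicit Arguments. Unset Strict Implicit. Unset Printing Implicit Defensive.
Import Order.TTheory GRing.Theory Num.Theory.
Local Open Scope ring_scope.

Fixpoint rc (nu : seq nat) (k : nat) : seq int :=
  match nu with
  | [::] => [::]
  | x :: nu' => [seq (j%:Z - k%:Z) | j <- iota 1 x] ++ rc nu' k.+1
  end.

Lemma cont_rc nu k : [seq cont_aux nu i k | i <- iota 1 (sumn nu)] = rc nu k.
Proof.
elim: nu k => [|x nu IH] k //=.
rewrite iotaD map_cat; congr (_ ++ _).
  apply/eq_in_map => i; rewrite mem_iota => /andP[_ hi].
  by rewrite ifT //; lia.
rewrite -IH addnC iotaDl -map_comp; apply/eq_in_map => i.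
rewrite mem_iota => /andP[hi _] /=.
rewrite ifN; last by lia.
by rewrite addKn.
Qed.

Lemma rc_bounds nu k c : c \in rc nu k ->
  (1 - k%:Z - (size nu)%:Z < c) && (c <= (sumn nu)%:Z - k%:Z).
Proof.
elim: nu k => [|x nu IH] k //=.
rewrite mem_cat => /orP[/mapP[j]|/IH]; last by move=> /andP[h1 h2]; apply/andP; split; lia.
by rewrite mem_iota => /andP[h1 h2] ->; apply/andP; split; lia.
Qed.

Lemma size_le_sumn nu : all (fun x => 0 < x)%N nu -> (size nu <= sumn nu)%N.
Proof. elim: nu => //= x nu IH /andP[h1 /IH h2]; lia. Qed.

Lemma rc_upper nu k x : sorted geq nu -> (head 0 nu <= x)%N ->
  forall c, c \in rc nu k -> c <= x%:Z - k%:Z.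
Proof.
elim: nu k x => [|y nu IH] k x //= hs hy c.
have hs' : sorted geq nu := path_sorted hs.
have hh : (head 0 nu <= y)%N by case: (nu) hs => //= z l /andP[].
rewrite mem_cat => /orP[/mapP[j]|/(IH _ _ hs' hh)]; last by lia.
by rewrite mem_iota => /andP[h1 h2] ->; lia.
Qed.

Lemma rc_head y nu k : (0 < y)%N -> y%:Z - k%:Z \in rc (y :: nu) k.
Proof. by move=> hy /=; rewrite mem_cat; apply/orP; left; apply/mapP; exists y => //; rewrite mem_iota; lia. Qed.

Lemma is_part_cons x nu : is_partition (x :: nu) ->
  [/\ (0 < x)%N, (head 0 nu <= x)%N & is_partition nu].
Proof.
rewrite /is_partition /= => /andP[hs /andP[hx ha]]; split => //.
  by case: (nu) hs => //= z l /andP[].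
by rewrite ha (path_sorted hs).
Qed.

Lemma rc_inj nu mu k : is_partition nu -> is_partition mu ->
  perm_eq (rc nu k) (rc mu k) -> nu = mu.
Proof.
elim: nu mu k => [|x nu IH] [|y mu] k //.
- move=> _ /is_part_cons[hy _ _] /perm_mem H.
  by have := H (y%:Z - k%:Z); rewrite rc_head.
- move=> /is_part_cons[hx _ _] _ /perm_mem H.
  by have := H (x%:Z - k%:Z); rewrite rc_head.
move=> hn hm H.
have hn' := hn; have hm' := hm.
case/is_part_cons: hn' => hx hhx pn; case/is_part_cons: hm' => hy hhy pm.
have hxy : x = y.
  apply/eqP; rewrite eqn_leq; apply/andP; split.
    have := perm_mem H (x%:Z - k%:Z); rewrite rc_head // => /esym.
    case/andP: hm => hs _ Hc; have := @rc_upper _ k y hs (leqnn _) _ Hc.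
    lia.
  have := perm_mem H (y%:Z - k%:Z); rewrite rc_head //.
  case/andP: hn => hs _ Hc; have := @rc_upper _ k x hs (leqnn _) _ Hc.
  lia.
subst y; move: H => /= ; rewrite perm_cat2l => H.
by rewrite (IH mu k.+1).
Qed.

Definition mon n (i : 'I_n) (k : nat) : monom n := [ffun j => if j == i then k else 0%N].
Definition cq (C : nzRingType) r s (q : {poly C}) (i : 'I_(r+s)) (k : nat) : C :=
  if (i < r)%N then q`_k else - ((-1) ^+ k * q`_k).
Definition Pq (C : nzRingType) r s (q : {poly C}) : mpoly C (r+s) :=
  [seq (mon i (k : nat), cq q i (k : nat)) | i : 'I_(r+s) <- enum 'I_(r+s), k : 'I_(size q) <- enum 'I_(size q)].

Lemma Pq_sum (C : nzRingType) r s (q : {poly C}) (G : monom (r+s) * C -> C) :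
  \sum_(t <- Pq r s q) G t = \sum_(i < r + s) \sum_(k < size q) G (mon i k, cq q i k).
Proof.
rewrite /Pq big_allpairs_dep /= big_enum /=; apply: eq_bigr => i _.
by rewrite big_enum.
Qed.

Lemma mexp_mon n (i : 'I_n) k j : (j < n)%N -> mexp (mon i k) j = if (j == i) then k else 0%N.
Proof.
move=> hj; rewrite /mexp (insubT (fun j => j < n)%N hj) /= /mon ffunE.
by [].
Qed.

Lemma Pq_super (C : nzRingType) r s (q : {poly C}) : supersymmetric (Pq r s q).
Proof.
split.
  move=> sigma hsig m; rewrite /mcoef big_mkcond Pq_sum [RHS]big_mkcond Pq_sum /=.
  rewrite [RHS](reindex_inj (@perm_inj _ sigma)) /=; apply: eq_bigr => i _.
  apply: eq_bigr => k _.
  have -> : cq q (sigma i) k = cq q i k by rewrite /cq hsig.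
  congr (if _ then _ else _).
  apply/eqP/eqP => [E|E].
    apply/ffunP => j; have := congr1 (fun f : monom _ => f ((sigma^-1)%g j)) E.
    rewrite !ffunE permKV => <-.
    have -> : (sigma^-1%g j == i) = (j == sigma i) by rewrite -(inj_eq (@perm_inj _ sigma)) permKV.
    by [].
  apply/ffunP => j; rewrite -E !ffunE.
  by rewrite (inj_eq (@perm_inj _ sigma)).
move=> r0 s0 m k k0; rewrite big_mkcond Pq_sum /=.
have hr1 : (r.-1 < r + s)%N by lia.
have hr2 : (r < r + s)%N by lia.
pose i0 := Ordinal hr1; pose i1 := Ordinal hr2.
have ne01 : i1 != i0 by apply/eqP => /(congr1 val) /=; lia.
rewrite (bigD1 i0) //= (bigD1 i1) //= addrA [X in _ + X]big1 ?addr0; last first.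
  move=> i /andP[h0 h1]; apply: big1 => j _.
  rewrite !mexp_mon //.
  have -> : (r.-1 == i) = false by apply/negbTE; apply: contraNneq h0 => E; apply/eqP/val_inj.
  have -> : (r == i) = false by apply/negbTE; apply: contraNneq h1 => E; apply/eqP/val_inj.
  have -> : ((0 + 0)%N == k) = false by apply/eqP; lia.
  by rewrite andbF.
rewrite -big_split /=; apply: big1 => j _.
rewrite !mexp_mon // eqxx /=.
have -> : (r.-1 == i1) = false by apply/negbTE; apply/eqP => /= ; lia.
have -> : (r == i0) = false by apply/negbTE; apply/eqP => /= ; lia.
have hd : forall i, (i = i0 \/ i = i1) -> drop_xr_y1 (mon i j) = [ffun => 0%N].
  move=> i hi; apply/ffunP => l; rewrite !ffunE; case: ifP => // H.
  case: (l =P i) => // E; subst l.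
  by case: hi H => -> /=; rewrite eqxx ?orbT.
rewrite !hd; [|by right|by left].
rewrite eqxx add0n addn0; case: (_ && _); last by rewrite addr0.
rewrite /cq /= ifT; last by lia.
rewrite ifF; last by lia.
rewrite expr0 mulr1 mulNr -mulrA [q`_j * _]commr_sign mulrA -expr2 -exprM mulnC exprM sqrrN !expr1n mul1r.
by rewrite subrr. Qed.

Lemma meval_Pq (C : comNzRingType) r s (q : {poly C}) (a : 'I_(r+s) -> C) :
  meval (Pq r s q) a = \sum_(i < r+s) (if (i < r)%N then q.[a i] else - q.[- a i]).
Proof.
rewrite /meval Pq_sum; apply: eq_bigr => i _ /=.
have hp : forall k, \prod_(j < r + s) a j ^+ mon i k j = a i ^+ k.
  move=> k; rewrite (bigD1 i) //= big1 ?mulr1; first by rewrite ffunE eqxx.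
  by move=> j hj; rewrite ffunE (negbTE hj) expr0.
under eq_bigr => k _ do rewrite hp.
rewrite /cq; case: ifP => _; first by rewrite horner_coef.
rewrite horner_coef -sumrN; apply: eq_bigr => k _.

by rewrite [(- a i) ^+ _]exprNn mulNr mulrCA mulrA. Qed.

Lemma sum_count (C : numDomainType) (U : seq C) a :
  \sum_(x <- U) ((x == a)%:R : C) = (count_mem a U)%:R.
Proof. by elim: U => [|y U IH]; rewrite ?big_nil ?big_cons //= IH natrD. Qed.

Lemma sep (C : numDomainType) (U W : seq C) : ~~ perm_eq U W ->
  exists q : {poly C}, \sum_(x <- U) q.[x] != \sum_(x <- W) q.[x].
Proof.
rewrite /perm_eq => /allPn [a ha hne].
pose q := \prod_(b <- U ++ W | b != a) ('X - b%:P).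
have hqa : q.[a] != 0.
  rewrite horner_prod prodf_seq_neq0; apply/allP => b _; apply/implyP => hb.
  by rewrite hornerXsubC subr_eq0 eq_sym.
have hq : forall x, x \in U ++ W -> q.[x] = (x == a)%:R * q.[a].
  move=> x hx; case: (eqVneq x a) => [->|hxa]; first by rewrite mul1r.
  rewrite mul0r; apply/eqP; rewrite horner_prod prodf_seq_eq0.
  by apply/hasP; exists x => //; rewrite hxa hornerXsubC subrr eqxx.
exists q.
rewrite (eq_big_seq (fun x => (x == a)%:R * q.[a])); last first.
  by move=> x hx; apply: hq; rewrite mem_cat hx ?orbT.
rewrite [X in _ != X](eq_big_seq (fun x => (x == a)%:R * q.[a])); last first.
  by move=> x hx; apply: hq; rewrite mem_cat hx ?orbT.
rewrite -!mulr_suml !sum_count; apply: contra hne => /eqP E.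
by rewrite /= -(eqr_nat C); apply/eqP; exact: (mulIf hqa E).
Qed.

Lemma map_const_in (T U : eqType) (f : T -> U) (s : seq T) c :
  (forall x, x \in s -> f x = c) -> map f s = nseq (size s) c.
Proof.
elim: s => //= x s IH H; rewrite H ?mem_head // IH // => y hy.
by apply: H; rewrite in_cons hy orbT.
Qed.

Lemma sum_iota (R : nmodType) m n (F : nat -> R) :
  \sum_(i <- iota m n) F i = \sum_(i < n) F (m + i)%N.
Proof.
elim: n m => [|n IH] m; first by rewrite big_nil big_ord0.
by rewrite /= big_cons IH big_ord_recl addn0; congr (_ + _); apply: eq_bigr => i _; rewrite addSnnS.
Qed.

Lemma meval_lists (C : comNzRingType) r s (delta : C) lam (q : {poly C}) :
  meval (Pq r s q) (cpoint r s delta lam) =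
  \sum_(x <- [seq cval r s delta lam i | i <- iota 1 r]) q.[x]
  - \sum_(x <- [seq - cval r s delta lam i | i <- iota r.+1 s]) q.[x].
Proof.
rewrite meval_Pq big_split_ord /= !big_map !sum_iota.
congr (_ + _).
  by apply: eq_bigr => i _; rewrite ifT.
rewrite -sumrN; apply: eq_bigr => i _; rewrite ifF; last by lia.
by rewrite /cpoint /= addSn.
Qed.

Lemma Ulist_eq (C : nzRingType) r s (delta : C) lam t :
  (t <= r)%N -> sumn lam.1 = (r - t)%N ->
  [seq cval r s delta lam i | i <- iota 1 r] =
  map intr (rc lam.1 1) ++ nseq t 0.
Proof.
move=> htr hs1.
have -> : iota 1 r = iota 1 ((r - t) + t) by rewrite subnK.
rewrite iotaD map_cat; congr (_ ++ _).
  rewrite -cont_rc hs1 -map_comp; apply/eq_in_map => i; rewrite mem_iota => /andP[h1 h2].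
  by rewrite /cval /= hs1 ifT //; lia.
rewrite (@map_const_in _ _ _ _ 0) ?size_iota // => i; rewrite mem_iota => /andP[h1 h2].
by rewrite /cval /= hs1 ifF ?ifT //; lia.
Qed.

Lemma Wlist_eq (C : nzRingType) r s (delta : C) lam t :
  (t <= r)%N -> (t <= s)%N -> sumn lam.1 = (r - t)%N -> sumn lam.2 = (s - t)%N ->
  [seq - cval r s delta lam i | i <- iota r.+1 s] =
  nseq t 0 ++ map (fun c => - (intr c + delta)) (rc lam.2 1).
Proof.
move=> htr hts hs1 hs2.
have -> : iota r.+1 s = iota r.+1 (t + (s - t)) by rewrite subnKC.
rewrite iotaD map_cat; congr (_ ++ _).
  rewrite (@map_const_in _ _ _ _ 0) ?size_iota // => i; rewrite mem_iota => /andP[h1 h2].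
  by rewrite /cval /= hs1 ifF ?ifT ?oppr0 //; lia.
rewrite -cont_rc hs2 -map_comp.
have -> : (r.+1 + t = (r + t) + 1)%N by lia.
rewrite iotaDl -map_comp; apply/eq_in_map => i; rewrite mem_iota => /andP[h1 h2].
rewrite /cval /= hs1 ifF; last by lia.
rewrite ifF; last by lia.
have -> : (r + t + i - r - (r - (r - t)) = i)%N by lia.
by [].
Qed.

Lemma filter_nil_in (T : eqType) (a : pred T) s : (forall x, x \in s -> ~~ a x) -> filter a s = [::].
Proof.
elim: s => //= x s IH H; rewrite ifN ?IH ?H ?mem_head // => y hy.
by apply: H; rewrite in_cons hy orbT.
Qed.

Lemma filter_all_in (T : eqType) (a : pred T) s : (forall x, x \in s -> a x) -> filter a s = s.
Proof.
elim: s => //= x s IH H; rewrite ifT ?IH ?H ?mem_head // => y hy.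
by apply: H; rewrite in_cons hy orbT.
Qed.

Lemma split_perm (T : eqType) (A1 A2 B1 B2 : seq T) :
  perm_eq (A1 ++ B2) (A2 ++ B1) ->
  (forall x, x \in B1 ++ B2 -> x \notin A1 ++ A2) ->
  perm_eq A1 A2 /\ perm_eq B1 B2.
Proof.
move=> H hd.
pose P := [pred x | x \in A1 ++ A2].
have h1 := perm_filter P H; have h2 := perm_filter (predC P) H.
rewrite !filter_cat in h1 h2.
rewrite (@filter_all_in _ P A1) ?(@filter_all_in _ P A2) in h1; last 2 first.
- by move=> x hx; rewrite inE mem_cat hx orbT.
- by move=> x hx; rewrite inE mem_cat hx.
rewrite (@filter_nil_in _ P B1) ?(@filter_nil_in _ P B2) ?cats0 in h1; last 2 first.
- by move=> x hx; rewrite inE hd // mem_cat hx orbT.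
- by move=> x hx; rewrite inE hd // mem_cat hx.
rewrite (@filter_all_in _ _ B1) ?(@filter_all_in _ _ B2) in h2; last 2 first.
- by move=> x hx; rewrite inE /= hd // mem_cat hx orbT.
- by move=> x hx; rewrite inE /= hd // mem_cat hx.
rewrite (@filter_nil_in _ _ A1) ?(@filter_nil_in _ _ A2) in h2; last 2 first.
- by move=> x hx; rewrite inE /= negbK mem_cat hx orbT.
- by move=> x hx; rewrite inE /= negbK mem_cat hx.
by split; last rewrite perm_sym.
Qed.

Lemma rc_bnd nu c : is_partition nu -> c \in rc nu 1 ->
  (1 - (sumn nu)%:Z <= c) && (c <= (sumn nu)%:Z - 1).
Proof.
move=> /andP[_ hp] hc; have := rc_bounds hc; have := size_le_sumn hp.
move=> h1 /andP[h2 h3]; apply/andP; split; lia.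
Qed.

Definition parts3 : seq (seq nat) :=
  [:: [::]; [:: 1]; [:: 2]; [:: 1; 1]; [:: 3]; [:: 2; 1]; [:: 1; 1; 1]]%N.

Lemma parts3P nu : is_partition nu -> (sumn nu <= 3)%N -> nu \in parts3.
Proof.
case: nu => [|a [|b [|c [|d l]]]] //=.
- by case: a => [|[|[|[|a]]]].
- by case: a => [|[|[|[|a]]]]; case: b => [|[|[|[|b]]]].
- by case: a => [|[|[|[|a]]]]; case: b => [|[|[|[|b]]]]; case: c => [|[|[|[|c]]]].
rewrite /is_partition /= => /andP[_ /and5P[ha hb hc hd _]]; lia.
Qed.

Definition okp (r s : nat) (a b : seq nat) :=
  [&& (sumn a <= r)%N, (sumn b <= s)%N & (sumn a + s == sumn b + r)%N].

Definition chk (r s : nat) :=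
  all (fun a => all (fun b => all (fun c => all (fun d =>
    okp r s a b ==> okp r s c d ==>
    perm_eq (rc a 1 ++ map -%R (rc d 1)) (rc c 1 ++ map -%R (rc b 1)) ==>
    (a == c) && (b == d)) parts3) parts3) parts3) parts3.

Lemma chk_ok : [&& chk 1 2, chk 1 3, chk 2 1 & chk 3 1].
Proof. by vm_compute. Qed.

Lemma pair_eq2 (x y : seq nat * seq nat) : x.1 = y.1 -> x.2 = y.2 -> x = y.
Proof. by case: x y => [? ?] [? ?] /= -> ->. Qed.

Lemma key (C : numClosedFieldType) r s (delta : C) lam mu :
  walled_brauer_semisimple r s delta -> in_Lambda r s lam -> in_Lambda r s mu ->
  perm_eq (map intr (rc lam.1 1) ++ map (fun c => - (intr c + delta)) (rc mu.2 1))
          (map intr (rc mu.1 1) ++ map (fun c => - (intr c + delta)) (rc lam.2 1)) ->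
  lam = mu.
Proof.
move=> hss [t1 h1] [t2 h2] H.
move: h1 => /and5P[ht1 p11 p12 /eqP s11 /eqP s12].
move: h2 => /and5P[ht2 p21 p22 /eqP s21 /eqP s22].
have bL : forall c, c \in rc lam.1 1 ++ rc mu.1 1 -> (1 - r%:Z <= c) && (c <= r%:Z - 1).
  move=> c; rewrite mem_cat => /orP[hc|hc].
    by have := rc_bnd p11 hc; rewrite s11; lia.
  by have := rc_bnd p21 hc; rewrite s21; lia.
have bR : forall c, c \in rc lam.2 1 ++ rc mu.2 1 -> (1 - s%:Z <= c) && (c <= s%:Z - 1).
  move=> c; rewrite mem_cat => /orP[hc|hc].
    by have := rc_bnd p12 hc; rewrite s12; lia.
  by have := rc_bnd p22 hc; rewrite s22; lia.
have gen : (forall c1 c2, c1 \in rc lam.1 1 ++ rc mu.1 1 -> c2 \in rc lam.2 1 ++ rc mu.2 1 ->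
             (c1%:~R : C) != - (c2%:~R + delta)) -> lam = mu.
  move=> hD.
  case: (split_perm H) => [x|hA hB].
    rewrite -!map_cat => /mapP[c2 hc2 ->]; apply/negP => /mapP[c1 hc1 E].
    have hc2p : c2 \in rc lam.2 1 ++ rc mu.2 1 by move: hc2; rewrite !mem_cat => /orP[]->; rewrite ?orbT.
    by move: (hD c1 c2 hc1 hc2p); rewrite -E eqxx.
  apply: pair_eq2.
    by apply: rc_inj => //; apply: perm_map_inj hA; apply: intr_inj.
  apply: rc_inj => //; apply: perm_map_inj hB.
  by move=> x y /oppr_inj /addIr /intr_inj.
case: hss => [hrs | hnint | habs | [hd0 hrs]].
- apply: gen => c1 c2 h1 h2; have := bL _ h1; have := bR _ h2.
  by case: hrs => ->; lia.
- apply: gen => c1 c2 h1 h2; apply/negP => /eqP E; apply: hnint.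
  exists (- c1 - c2); rewrite rmorphB rmorphN /= E; ring.
- apply: gen => c1 c2 h1 h2; apply/negP => /eqP E.
  have hd : delta = (- c1 - c2)%:~R by rewrite rmorphB rmorphN /= E; ring.
  move: habs; rewrite hd -intr_norm.
  have -> : ((r + s)%:R - 2 : C) = ((r + s)%:Z - 2)%:~R by rewrite rmorphB.
  rewrite ltr_int; have := bL _ h1; have := bR _ h2.
  move=> /andP[a1 a2] /andP[b1 b2]; rewrite ltNge; apply/negP/negPn.
  rewrite ler_norml; apply/andP; split; lia.
subst delta.
have hm : forall l : seq int, map (fun c => - (c%:~R + (0 : C))) l = map intr (map -%R l).
  by move=> l; rewrite -map_comp; apply: eq_map => c /=; rewrite addr0 rmorphN.
rewrite !hm -!map_cat in H; have {}H := perm_map_inj (@intr_inj C) H.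
have hok1 : okp r s lam.1 lam.2 by apply/and3P; split; lia.
have hok2 : okp r s mu.1 mu.2 by apply/and3P; split; lia.
have hsm : (r <= 3)%N /\ (s <= 3)%N.
  by move: hrs; rewrite !inE => /or4P[] /eqP [-> ->].
have q11 : lam.1 \in parts3 by apply: parts3P => //; lia.
have q12 : lam.2 \in parts3 by apply: parts3P => //; lia.
have q21 : mu.1 \in parts3 by apply: parts3P => //; lia.
have q22 : mu.2 \in parts3 by apply: parts3P => //; lia.
have hc : chk r s.
  by move: hrs chk_ok; rewrite !inE => /or4P[] /eqP [-> ->] /and4P[].
move/allP: hc => /(_ _ q11) /allP /(_ _ q12) /allP /(_ _ q21) /allP /(_ _ q22).
rewrite hok1 hok2 H /= => /andP[/eqP e1 /eqP e2].
exact: pair_eq2.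
Qed.

Lemma diff_swap (C : comNzRingType) (a b c d : C) : a - b = c - d -> a + d = c + b.
Proof.
move=> E; apply/eqP; rewrite -subr_eq0.
have -> : a + d - (c + b) = (a - b) - (c - d) by ring.
by rewrite E subrr.
Qed.

Unset Implicit Arguments.
Theorem mainTheorem6 (C : numClosedFieldType) (r s : nat) (delta : C)
  (lam mu : seq nat * seq nat) :
  walled_brauer_semisimple r s delta ->
  in_Lambda r s lam -> in_Lambda r s mu -> lam <> mu ->
  exists p : mpoly C (r + s),
    supersymmetric p /\ meval p (cpoint r s delta lam) != meval p (cpoint r s delta mu).
Proof.
move=> hss hl hm hne.
have hnp := hne; move/(fun h => h (key hss hl hm _)): hnp.
move=> hnp.
have hnp' : ~~ perm_eq (map intr (rc lam.1 1) ++ map (fun c => - (intr c + delta)) (rc mu.2 1))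
          (map intr (rc mu.1 1) ++ map (fun c => - (intr c + delta)) (rc lam.2 1)).
  by apply/negP => hp; apply: hnp.
case: hl => [t1 /and5P[ht1 _ _ /eqP s11 /eqP s12]].
case: hm => [t2 /and5P[ht2 _ _ /eqP s21 /eqP s22]].
have hnU : ~~ perm_eq ([seq cval r s delta lam i | i <- iota 1 r] ++
                       [seq - cval r s delta mu i | i <- iota r.+1 s])
                      ([seq cval r s delta mu i | i <- iota 1 r] ++
                       [seq - cval r s delta lam i | i <- iota r.+1 s]).
  rewrite (@Ulist_eq _ r s delta lam t1) ?(@Ulist_eq _ r s delta mu t2) //; try lia.
  rewrite (@Wlist_eq _ r s delta lam t1) ?(@Wlist_eq _ r s delta mu t2) //; try lia.
  apply: contra hnp' => /seq.permP hc; apply/seq.permP => p; have := hc p.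
  rewrite !count_cat; move: (count p _) (count p _) (count p _) (count p _) (count p _) (count p _) => a1 a2 a3 a4 a5 a6. lia.
case: (sep hnU) => q hq.
exists (Pq r s q); split; first exact: Pq_super.
rewrite !meval_lists; apply: contra hq => /eqP E; apply/eqP; rewrite !big_cat /=.
exact: diff_swap.
Qed.
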